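(* Let $\alpha,\beta$ be cardinals with $\alpha>2$ and $\beta>2$. The class of $(\alpha,\beta)$-representable posets has no universal first-order axiomatization (in the signature consisting of one binary relation $\leq$).
   Context: For posets $P,Q$, a monotone map $h:P\to Q$ is an $(\alpha,\beta)$-morphism if whenever $S\subseteq P$ with $|S|<\alpha$ and $\bigwedge S$ exists in $P$, then $h(\bigwedge S)=\bigwedge h[S]$, and whenever $T\subseteq P$ with $|T|<\beta$ and $\bigvee T$ exists in $P$, then $h(\bigvee T)=\bigvee h[T]$. A poset $P$ is $(\alpha,\beta)$-representable if there is a set $X$ and an $(\alpha,\beta)$-morphism $h:P\to\wp(X)$ that is an order embedding, where $\wp(X)$ is the power set of $X$ ordered by inclusion. *)

(* Defs.v *)
From Stdlib Require Import Arith.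

Definition injective {A B : Type} (f : A -> B) : Prop :=
  forall x y, f x = f y -> x = y.

(* |S| < |A| for a subset S of T, and A a type standing for the cardinal alpha *)
Definition card_lt {T : Type} (S : T -> Prop) (A : Type) : Prop :=
  (exists f : {x : T | S x} -> A, injective f) /\
  ~ (exists g : A -> {x : T | S x}, injective g).

Definition card_gt2 (A : Type) : Prop := ~ (exists g : A -> bool, injective g).

Definition is_poset {T : Type} (le : T -> T -> Prop) : Prop :=
  (forall x, le x x) /\
  (forall x y, le x y -> le y x -> x = y) /\
  (forall x y z, le x y -> le y z -> le x z).

Definition is_lb {T : Type} (le : T -> T -> Prop) (S : T -> Prop) (m : T) : Prop :=
  forall s, S s -> le m s.
Definition is_ub {T : Type} (le : T -> T -> Prop) (S : T -> Prop) (m : T) : Prop :=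
  forall s, S s -> le s m.
Definition is_glb {T : Type} (le : T -> T -> Prop) (S : T -> Prop) (m : T) : Prop :=
  is_lb le S m /\ forall m', is_lb le S m' -> le m' m.
Definition is_lub {T : Type} (le : T -> T -> Prop) (S : T -> Prop) (m : T) : Prop :=
  is_ub le S m /\ forall m', is_ub le S m' -> le m m'.

Definition pset_le {X : Type} (U V : X -> Prop) : Prop := forall x, U x -> V x.

Definition image {T U : Type} (h : T -> U) (S : T -> Prop) : U -> Prop :=
  fun y => exists s, S s /\ y = h s.

Definition ab_morphism (A B : Type) {T X : Type} (le : T -> T -> Prop)
    (h : T -> (X -> Prop)) : Prop :=
  (forall x y, le x y -> pset_le (h x) (h y)) /\
  (forall (S : T -> Prop) (m : T), card_lt S A -> is_glb le S m ->
       is_glb pset_le (image h S) (h m)) /\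
  (forall (S : T -> Prop) (m : T), card_lt S B -> is_lub le S m ->
       is_lub pset_le (image h S) (h m)).

Definition order_embedding {T X : Type} (le : T -> T -> Prop)
    (h : T -> (X -> Prop)) : Prop :=
  forall x y, le x y <-> pset_le (h x) (h y).

Definition representable (A B : Type) {T : Type} (le : T -> T -> Prop) : Prop :=
  exists (X : Type) (h : T -> (X -> Prop)), ab_morphism A B le h /\ order_embedding le h.

(* variables are de Bruijn indices *)
Inductive form : Type :=
| FRel : nat -> nat -> form
| FEq  : nat -> nat -> form
| FBot : form
| FImp : form -> form -> form
| FAll : form -> form.

Definition scons {T : Type} (x : T) (env : nat -> T) : nat -> T :=
  fun n => match n with 0 => x | S k => env k end.

Fixpoint sat {T : Type} (R : T -> T -> Prop) (env : nat -> T) (f : form) : Prop :=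
  match f with
  | FRel i j => R (env i) (env j)
  | FEq i j => env i = env j
  | FBot => False
  | FImp a b => sat R env a -> sat R env b
  | FAll a => forall x : T, sat R (scons x env) a
  end.

Fixpoint bound_by (n : nat) (f : form) : Prop :=
  match f with
  | FRel i j => i < n /\ j < n
  | FEq i j => i < n /\ j < n
  | FBot => True
  | FImp a b => bound_by n a /\ bound_by n b
  | FAll a => bound_by (S n) a
  end.

Definition sentence (f : form) : Prop := bound_by 0 f.

Fixpoint qfree (f : form) : Prop :=
  match f with
  | FAll _ => False
  | FImp a b => qfree a /\ qfree b
  | _ => True
  end.

Inductive universal : form -> Prop :=
| univ_qf : forall f, qfree f -> universal f
| univ_all : forall f, universal f -> universal (FAll f).

Definition models {T : Type} (R : T -> T -> Prop) (f : form) : Prop :=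
  forall env : nat -> T, sat R env f.

(* Main.v *)
Require Import Defs.
From Stdlib Require Import Classical FunctionalExtensionality PropExtensionality ProofIrrelevance.

Inductive N5 : Type := nz | na | nb | nc | no.

Definition leb5 (x y : N5) : bool :=
  match x, y with
  | nz, _ => true
  | _, no => true
  | na, na | na, nb | nb, nb | nc, nc => true
  | _, _ => false
  end.

Definition leQ (x y : N5) : Prop := leb5 x y = true.

Definition N5_eq_dec (x y : N5) : {x = y} + {x <> y}.
Proof. decide equality. Defined.

Lemma qf_pres (P : Type) (RP : P -> P -> Prop) (e : N5 -> P)
  (einj : forall x y, e x = e y -> x = y)
  (erel : forall x y, leQ x y <-> RP (e x) (e y)) :
  forall f, qfree f -> forall env, sat leQ env f <-> sat RP (fun n => e (env n)) f.
Proof.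
  induction f; simpl; intros Hq env.
  - apply erel.
  - split; [intros ->; reflexivity | apply einj].
  - tauto.
  - destruct Hq as [H1 H2]. specialize (IHf1 H1 env). specialize (IHf2 H2 env). tauto.
  - destruct Hq.
Qed.

Lemma univ_pres (P : Type) (RP : P -> P -> Prop) (e : N5 -> P)
  (einj : forall x y, e x = e y -> x = y)
  (erel : forall x y, leQ x y <-> RP (e x) (e y)) :
  forall f, universal f -> forall env, sat RP (fun n => e (env n)) f -> sat leQ env f.
Proof.
  induction 1; intros env Hs.
  - apply (qf_pres P RP e einj erel f H env). exact Hs.
  - simpl in *. intro y. apply IHuniversal.
    specialize (Hs (e y)).
    replace (fun n => e (scons y env n)) with (scons (e y) (fun n => e (env n))).
    + exact Hs.
    + apply functional_extensionality; intros [|n]; reflexivity.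
Qed.

Lemma two_elems (A : Type) : card_gt2 A -> exists a1 a2 : A, a1 <> a2.
Proof.
  intro hA. apply NNPP. intro Hn. apply hA. exists (fun _ => true).
  intros x y _. apply NNPP. intro Hxy. apply Hn. exists x, y. exact Hxy.
Qed.

Lemma card2 (A : Type) (u v : N5) : u <> v -> card_gt2 A ->
  card_lt (fun x => x = u \/ x = v) A.
Proof.
  intros Huv hA.
  set (k := fun s : {x : N5 | x = u \/ x = v} =>
              if N5_eq_dec (proj1_sig s) u then true else false).
  assert (kinj : injective k).
  { intros [x px] [y py]; unfold k; simpl.
    destruct (N5_eq_dec x u); destruct (N5_eq_dec y u); intro E; try discriminate.
    - subst. f_equal. apply proof_irrelevance.
    - assert (x = v) by (destruct px; tauto). assert (y = v) by (destruct py; tauto).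
      subst. f_equal. apply proof_irrelevance. }
  split.
  - destruct (two_elems A hA) as [a1 [a2 H12]].
    exists (fun s => if k s then a1 else a2).
    intros s t E. apply kinj.
    destruct (k s), (k t); auto; congruence.
  - intros [g ginj]. apply hA. exists (fun x => k (g x)).
    intros x y E. apply ginj, kinj, E.
Qed.

Lemma N5_not_rep (A B : Type) : card_gt2 A -> card_gt2 B -> ~ representable A B leQ.
Proof.
  intros hA hB [X [h [[hmon [hglb hlub]] hemb]]].
  assert (Hl := hlub (fun x => x = na \/ x = nc) no (card2 B na nc ltac:(discriminate) hB)).
  assert (Hg := hglb (fun x => x = nb \/ x = nc) nz (card2 A nb nc ltac:(discriminate) hA)).
  assert (Hlub : is_lub leQ (fun x => x = na \/ x = nc) no).
  { split. - intros s _; destruct s; reflexivity.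
    - intros m' Hm. assert (H1 := Hm na (or_introl eq_refl)). assert (H2 := Hm nc (or_intror eq_refl)). destruct m'; try discriminate; reflexivity. }
  assert (Hglb : is_glb leQ (fun x => x = nb \/ x = nc) nz).
  { split. - intros s _; reflexivity.
    - intros m' Hm. assert (H1 := Hm nb (or_introl eq_refl)). assert (H2 := Hm nc (or_intror eq_refl)).
      destruct m'; try discriminate; reflexivity. }
  specialize (Hl Hlub). specialize (Hg Hglb).
  destruct Hl as [_ Hl]. destruct Hg as [_ Hg].
  assert (U : pset_le (h no) (fun x => h na x \/ h nc x)).
  { apply Hl. intros s [t [[-> | ->] ->]]; intros x Hx; auto. }
  assert (I : pset_le (fun x => h nb x /\ h nc x) (h nz)).
  { apply Hg. intros s [t [[-> | ->] ->]]; intros x Hx; tauto. }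
  assert (Hba : leQ nb na).
  { apply hemb. intros x Hx.
    assert (Hx1 : h no x) by (apply (hmon nb no); [reflexivity | exact Hx]).
    destruct (U x Hx1) as [H|H]; [exact H|].
    apply (hmon nz na); [reflexivity|]. apply I. auto. }
  discriminate Hba.
Qed.

Theorem corollary2p9 (A B : Type) :
  card_gt2 A -> card_gt2 B ->
  ~ exists Sigma : form -> Prop,
      (forall f, Sigma f -> sentence f /\ universal f) /\
      (forall (T : Type) (R : T -> T -> Prop), inhabited T ->
         ((forall f, Sigma f -> models R f) <-> (is_poset R /\ representable A B R))).
Proof.
  intros hA hB [Sigma [HS H]].
  assert (HP : forall f, Sigma f -> models (@pset_le N5) f).
  { apply (H (N5 -> Prop) pset_le (inhabits (fun _ => True))). split.
    - split; [intros x y Hy; exact Hy|split].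
      + intros x y H1 H2. apply functional_extensionality; intro z.
        apply propositional_extensionality; split; auto.
      + intros x y z H1 H2 w Hw; auto.
    - exists N5, (fun x => x). split; [split; [|split]|].
      + intros x y Hxy; exact Hxy.
      + intros S m _ [Hlb Hgr]. split.
        * intros s [t [Ht ->]]. apply Hlb, Ht.
        * intros m' Hm'. apply Hgr. intros s Hs. apply Hm'. exists s; auto.
      + intros S m _ [Hub Hle]. split.
        * intros s [t [Ht ->]]. apply Hub, Ht.
        * intros m' Hm'. apply Hle. intros s Hs. apply Hm'. exists s; auto.
      + intros x y; tauto. }
  set (e := fun (x : N5) (y : N5) => leQ y x).
  assert (einj : forall x y, e x = e y -> x = y).
  { intros x y E. assert (H1 : e x x) by (unfold e, leQ; destruct x; reflexivity).
    assert (H2 : e y y) by (unfold e, leQ; destruct y; reflexivity).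
    rewrite E in H1. rewrite <- E in H2. unfold e, leQ in *.
    destruct x, y; try reflexivity; discriminate. }
  assert (erel : forall x y, leQ x y <-> pset_le (e x) (e y)).
  { intros x y; split.
    - intros Hxy z Hz. unfold e, leQ in *. destruct z, x, y; try discriminate; reflexivity.
    - intros Hs. apply Hs. unfold e, leQ; destruct x; reflexivity. }
  assert (HQ : forall f, Sigma f -> models leQ f).
  { intros f Hf env. apply (univ_pres _ pset_le e einj erel f (proj2 (HS f Hf)) env).
    apply HP, Hf. }
  destruct (proj1 (H N5 leQ (inhabits nz)) HQ) as [_ Hr].
  exact (N5_not_rep A B hA hB Hr).
Qed.
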